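(* Let $k$ be a domain, $R = k[X_0,\dots,X_m]/J$ a graded domain with $m\ge 1$, $X_0,\dots,X_m$ variables of positive integer weights $A_0,\dots,A_m$ and $J$ a homogeneous ideal, let $A=\operatorname{lcm}(A_0,\dots,A_m)$, $I=R_{\ge mA}$, and let $a_0,\dots,a_m$ be the positive integers with $a_iA_i=A$. Let $p\ge 2$ be an integer and assume $I^{p-1}=R_{\ge (p-1)mA}$. Let $c_0,\dots,c_m$ be nonnegative integers with $c_0A_0+\dots+c_mA_m\ge pmA$ (so the monomial $X_0^{c_0}\cdots X_m^{c_m}$ lies in $R_{\ge pmA}$). Fix $n$ with $1\le n\le m$ and suppose $a_i\le c_i$ for all $0\le i<n$; for each such $i$ let $k_i$ be the unique positive integer with $k_ia_i\le c_i<(k_i+1)a_i$. Then: (1) if $k_0+\dots+k_{n-1}\le m-1$, then $a_j\le c_j$ for some $j$ with $n\le j\le m$; (2) if $k_0+\dots+k_{n-1}\ge m$, then $X_0^{c_0}\cdots X_m^{c_m}\in I^p$.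
   Context: $R$ is $\mathbb N$-graded via $\deg X_i=A_i$, and $X_i$ also denotes its image in $R$. For a nonnegative integer $\alpha$, $R_{\ge\alpha}$ denotes the ideal of $R$ generated by all homogeneous elements of degree at least $\alpha$. *)

(* Defs.v *)
From HB Require Import structures.
From mathcomp Require Import all_boot all_order all_algebra.
From mathcomp Require Import mpoly.
Set Implicit Arguments. Unset Strict Implicit. Unset Printing Implicit Defensive.
Import GRing.Theory.
Local Open Scope ring_scope.

Definition wdeg (n : nat) (w : 'I_n -> nat) (mm : 'X_{1..n}) : nat :=
  (\sum_(i < n) w i * mm i)%N.

Definition wcomp (k : comRingType) (n : nat) (w : 'I_n -> nat) (d : nat)
  (P : {mpoly k[n]}) : {mpoly k[n]} :=
  \sum_(mm <- msupp P | wdeg w mm == d) P@_mm *: 'X_[mm].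

Definition whomog (k : comRingType) (n : nat) (w : 'I_n -> nat) (d : nat)
  (P : {mpoly k[n]}) : Prop :=
  forall mm, mm \in msupp P -> wdeg w mm = d.

Definition ideal_gen (R : comRingType) (S : R -> Prop) (x : R) : Prop :=
  exists (N : nat) (r s : 'I_N -> R), (forall i, S (s i)) /\ x = \sum_(i < N) r i * s i.

Definition ideal_pow (R : comRingType) (I : R -> Prop) (p : nat) : R -> Prop :=
  ideal_gen (fun x => exists f : 'I_p -> R, (forall i, I (f i)) /\ x = \prod_(i < p) f i).

(* R presented as k[X_0..X_{n-1}]/ker phi, graded by weights w:
   homogeneous elements of degree d are the images of weighted homogeneous
   polynomials of degree d;  R_{>= alpha} is the ideal they generate for d >= alpha *)
Definition Rge (k : comRingType) (n : nat) (w : 'I_n -> nat) (R : comRingType)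
  (phi : {mpoly k[n]} -> R) (alpha : nat) : R -> Prop :=
  ideal_gen (fun x => exists d P, (alpha <= d)%N /\ whomog w d P /\ x = phi P).

Definition lcm_weights (n : nat) (w : 'I_n -> nat) : nat := \big[lcmn/1%N]_(i < n) w i.

Definition monomial (k : comRingType) (n : nat) (c : 'I_n -> nat) : {mpoly k[n]} :=
  \prod_(i < n) 'X_i ^+ c i.

(* Main.v *)
Require Import Defs.
From HB Require Import structures.
From mathcomp Require Import all_boot all_order all_algebra.
From mathcomp Require Import mpoly.
From Stdlib Require Import ClassicalEpsilon.
Import GRing.Theory.
Local Open Scope ring_scope.
From mathcomp Require Import zify.
Lemma lcmw_dvd m (A : 'I_m -> nat) i : (A i %| lcm_weights A)%N.
Proof. exact: (biglcmn_sup i). Qed.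

Lemma lcmw_gt0 m (A : 'I_m -> nat) : (forall i, 0 < A i)%N -> (0 < lcm_weights A)%N.
Proof.
move=> H; rewrite /lcm_weights; elim/big_ind: _ => //.
by move=> x y hx hy; rewrite lcmn_gt0 hx hy.
Qed.

Lemma split_sum N (f : 'I_N -> nat) s : (s <= \sum_(i < N) f i)%N ->
  exists t : 'I_N -> nat, (forall i, t i <= f i)%N /\ (\sum_(i < N) t i)%N = s.
Proof.
elim: N f s => [|N IH] f s.
  rewrite big_ord0 leqn0 => /eqP ->; exists (fun _ => 0%N); split=> //; by rewrite big_ord0.
rewrite big_ord_recl => hs.
have [t' [ht1 ht2]] := IH (fun i => f (lift ord0 i)) (s - minn s (f ord0))%N ltac:(lia).
exists (fun i => match unlift ord0 i with Some j => t' j | None => minn s (f ord0) end).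
split.
  move=> i; case: unliftP => [j ->|->] //; exact: geq_minr.
rewrite big_ord_recl unlift_none.
under eq_bigr do rewrite liftK.
rewrite ht2; lia.
Qed.

Lemma ideal_pow_mul (R : comRingType) (I : R -> Prop) q x y :
  ideal_pow I q x -> I y -> ideal_pow I q.+1 (y * x).
Proof.
move=> [N [r [s [hs ->]]]] hy.
pose F i := proj1_sig (constructive_indefinite_description _ (hs i)).
have hF i : (forall j, I (F i j)) /\ s i = \prod_(j < q) F i j
  := proj2_sig (constructive_indefinite_description _ (hs i)).
exists N, r, (fun i => y * s i); split.
  move=> i; exists (fun j => match unlift ord0 j with Some j' => F i j' | None => y end).
  split.
    by move=> j; case: unliftP => [j' _|_]; [apply: (proj1 (hF i))|].
  rewrite big_ord_recl unlift_none; under eq_bigr do rewrite liftK.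
  by rewrite -(proj2 (hF i)).
by rewrite mulr_sumr; apply: eq_bigr => i _; rewrite mulrCA.
Qed.

Lemma monomialE (k : comRingType) n (c : 'I_n -> nat) :
  monomial k c = 'X_[[multinom c i | i < n]].
Proof. by rewrite mpolyXE_id /monomial; apply: eq_bigr => i _; rewrite mnmE. Qed.

Lemma monomial_whomog (k : idomainType) n (w : 'I_n -> nat) (c : 'I_n -> nat) :
  whomog w (\sum_(i < n) w i * c i)%N (monomial k c).
Proof.
move=> mm; rewrite monomialE msuppX inE => /eqP ->.
by rewrite /wdeg; apply: eq_bigr => i _; rewrite mnmE.
Qed.

Lemma monomialD (k : comRingType) n (c e : 'I_n -> nat) :
  (forall i, e i <= c i)%N ->
  monomial k c = monomial k e * monomial k (fun i => c i - e i)%N.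
Proof.
move=> h; rewrite /monomial -big_split; apply: eq_bigr => i _.
rewrite /= -exprD. by rewrite subnKC.
Qed.

Theorem mainTheorem3 (k : idomainType) (m : nat) (A : 'I_m.+1 -> nat)
  (R : idomainType) (phi : {rmorphism {mpoly k[m.+1]} -> R})
  (p n : nat) (c : 'I_m.+1 -> nat) :
  (1 <= m)%N ->
  (forall i, 0 < A i)%N ->
  (* R = k[X_0..X_m]/J with J = ker phi *)
  (forall y : R, exists P, phi P = y) ->
  (* J is homogeneous *)
  (forall P, phi P = 0 -> forall d, phi (wcomp A d P) = 0) ->
  (2 <= p)%N ->
  (forall x, ideal_pow (Rge A phi (m * lcm_weights A)) p.-1 x
             <-> Rge A phi (p.-1 * m * lcm_weights A) x) ->
  (p * m * lcm_weights A <= \sum_(i < m.+1) c i * A i)%N ->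
  (1 <= n <= m)%N ->
  (forall i : 'I_m.+1, (i < n)%N -> lcm_weights A %/ A i <= c i)%N ->
  ((\sum_(i < m.+1 | (i < n)%N) c i %/ (lcm_weights A %/ A i) <= m.-1)%N ->
     exists j : 'I_m.+1, (n <= j)%N /\ (lcm_weights A %/ A j <= c j)%N)
  /\
  ((m <= \sum_(i < m.+1 | (i < n)%N) c i %/ (lcm_weights A %/ A i))%N ->
     ideal_pow (Rge A phi (m * lcm_weights A)) p (phi (monomial k c))).
Proof.
move=> hm hA _ _ hp Hiff hc hn _.
have HL := lcmw_gt0 _ _ hA.
set L := lcm_weights A in HL Hiff hc *.
have ha i : (L %/ A i * A i = L)%N by rewrite divnK // (lcmw_dvd _ A i).
have ha0 i : (0 < L %/ A i)%N.
  by rewrite divn_gt0 // dvdn_leq // (lcmw_dvd _ A i).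
set a := fun i => (L %/ A i)%N.
rewrite -/(a _).
set f := fun i : 'I_m.+1 => if (i < n)%N then (c i %/ a i)%N else 0%N.
have hf : (\sum_(i < m.+1 | (i < n)%N) c i %/ a i = \sum_(i < m.+1) f i)%N.
  by rewrite big_mkcond.
rewrite hf; split.
  move=> hsum.
  case: (pickP (fun j : 'I_m.+1 => (n <= j) && (a j <= c j))%N) => [j /andP [h1 h2]|H].
    by exists j.
  exfalso.
  have key i : (c i * A i + 1 <= (f i + 1) * L)%N.
    rewrite /f; case: ifP => hi.
      have := ltn_ceil (c i) (ha0 i).
      rewrite -/(a i) => h.
      have := leq_mul h (leqnn (A i)).
      move: (hA i); rewrite -mulnA [(a i * A i)%N]ha; nia.
    have hci : (c i < a i)%N.
      have := H i; rewrite /= [(n <= i)%N]leqNgt hi /= => /negbT.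
      by rewrite -ltnNge.
    have := leq_mul hci (leqnn (A i)).
    by move: (hA i); rewrite [(a i * A i)%N]ha; nia.
  have hk : (\sum_(i < m.+1) (c i * A i + 1) <= \sum_(i < m.+1) (f i + 1) * L)%N.
    by apply: leq_sum => i _; exact: key.
  move: hk; rewrite big_split /= -big_distrl /= big_split /= !sum_nat_const card_ord /=.
  move=> hk.
  have h2 : ((\sum_(i < m.+1) f i + m.+1 * 1) * L <= (m.-1 + m.+1) * L)%N.
    by rewrite leq_mul2r; apply/orP; right; rewrite muln1 leq_add2r.
  have h3 : ((m.-1 + m.+1) * L <= p * m * L)%N.
    rewrite leq_mul2r; apply/orP; right.
    have : (m.-1 + m.+1 = 2 * m)%N by lia.
    by move=> ->; rewrite leq_mul2r hp orbT.
  have X := leq_trans hk (leq_trans h2 (leq_trans h3 hc)).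
  by move: X; rewrite muln1 addnS ltnNge leq_addr.
move=> hsum.
have [q Hq] : exists q, p = q.+1 by exists p.-1; lia.
subst p; simpl in Hiff.
have [t [ht1 ht2]] := split_sum _ _ _ hsum.
pose e i := (t i * a i)%N.
have he i : (e i <= c i)%N.
  rewrite /e; have := ht1 i; rewrite /f; case: ifP => _ h.
    apply: leq_trans (leq_trunc_div (c i) (a i)).
    by rewrite leq_mul2r h orbT.
  by move: h; rewrite leqn0 => /eqP ->.
have hwe : (\sum_(i < m.+1) A i * e i = m * L)%N.
  rewrite -[in RHS]ht2 big_distrl /=; apply: eq_bigr => i _.
  by rewrite /e mulnC -mulnA ha.
have hwc : (\sum_(i < m.+1) A i * (c i - e i) + m * L = \sum_(i < m.+1) c i * A i)%N.
  rewrite -hwe -big_split /=; apply: eq_bigr => i _.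
  by rewrite -mulnDr subnK // mulnC.
rewrite (monomialD k _ _ _ he) rmorphM /=.
apply: (ideal_pow_mul R (Rge A phi (m * L)) q (phi (monomial k (fun i => c i - e i)%N)) (phi (monomial k e))).
  apply/Hiff.
  exists 1%N, (fun _ => 1), (fun _ => phi (monomial k (fun i => c i - e i)%N)).
  split; last by rewrite big_ord1 mul1r.
  move=> _; exists (\sum_(i < m.+1) A i * (c i - e i))%N, (monomial k (fun i => c i - e i)%N).
  split; last by split=> //; apply: monomial_whomog.
  by rewrite -(leq_add2r (m * L)) hwc -mulnDl -mulSnr.
exists 1%N, (fun _ => 1), (fun _ => phi (monomial k e)).
split; last by rewrite big_ord1 mul1r.
move=> _; exists (\sum_(i < m.+1) A i * e i)%N, (monomial k e).
split; first by rewrite hwe; exact: leqnn.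
by split=> //; apply: monomial_whomog.
Qed.
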